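(* In the setting of the context, let $\mathcal S=(O_1,\dots,O_M)\in\mathcal Z^M$, let $m\in\{1,\dots,M\}$ and $O'_m\in\mathcal Z$, and let $\mathcal S^m$ be $\mathcal S$ with $O_m$ replaced by $O'_m$. Run SGD for $T$ steps on $\mathcal S$ and on $\mathcal S^m$ from the same initialization $\Psi_0$ and with the same index sequence $j_0,\dots,j_{T-1}$. Then $$\mathbb E_A\big[\|\Psi_{\mathcal S,T}-\Psi_{\mathcal S^m,T}\|_2\big]\le\frac{2\beta'\sqrt d}{M}\sum_{t=1}^T(1+\beta' d)^{t-1},$$ and consequently, for every $O\in\mathcal Z$, $$\big|\mathbb E_A[\mathcal L(O,\Psi_{\mathcal S,T})-\mathcal L(O,\Psi_{\mathcal S^m,T})]\big|\le\frac{2\beta\beta' d}{M}\sum_{t=1}^T(1+\beta' d)^{t-1}.$$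
   Context: An instance is a binary vector in $\{0,1\}^D$ formed by concatenating $d$ one-hot vectors, so it has exactly $d$ ones. Each instance $i$ is represented by $u_i=\sum_{i'}c_{ii'}x_{i'}$, a convex combination (weights $c_{ii'}\ge0$ summing to $1$) of such binary vectors; hence $u_i\in[0,1]^D$, $\|u_i\|_1\le d$. A proxy datum is a finite nonempty list $O=((u_1,y_1),\dots,(u_n,y_n))$ of such vectors with labels $y_i\in\mathcal Y$; $\mathcal Z$ is the set of all proxy data. The model predicts $h(u;\Psi)=\sigma(u\cdot\Psi)$, $\Psi\in\mathbb R^D$, $\sigma$ the logistic sigmoid, and $\mathcal L(O,\Psi)=\frac1n\sum_{i=1}^n l(y_i,h(u_i;\Psi))$ with $l$ differentiable in its second argument. Assumptions: (A1) $|l(y,a)-l(y,b)|\le\beta|a-b|$ for all $y,a,b$; (A2) for all $y,y'$, all admissible $u,u'$ and all $\Psi,\Psi'$, $\|\nabla_\Psi l(y,h(u;\Psi))-\nabla_\Psi l(y',h(u';\Psi'))\|_2\le\beta'\|\nabla_\Psi h(u;\Psi)-\nabla_\Psi h(u';\Psi')\|_2$. SGD with step size $\alpha\in(0,1]$ on a sequence $\mathcal S=(O_1,\dots,O_M)$: indices $j_0,\dots,j_{T-1}$ are drawn i.i.d. uniformly from $\{1,\dots,M\}$ (expectation $\mathbb E_A$ is over these indices), and $\Psi_{\mathcal S,t+1}=\Psi_{\mathcal S,t}-\alpha\nabla_\Psi\mathcal L(O_{j_t},\Psi_{\mathcal S,t})$, $\Psi_{\mathcal S,0}=\Psi_0$.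 *)

(* Defs.v *)
From HB Require Import structures.
From mathcomp Require Import all_boot all_order all_algebra.
From mathcomp Require Import all_classical all_reals all_analysis.
From Stdlib Require List.
Set Implicit Arguments. Unset Strict Implicit. Unset Printing Implicit Defensive.
Import Order.TTheory GRing.Theory Num.Theory.
Local Open Scope ring_scope.

Section Defs.
Variable R : realType.

Definition norm2 (D : nat) (v : 'rV[R]_D) : R := Num.sqrt (\sum_(k < D) v 0 k ^+ 2).

Definition dotp (D : nat) (u v : 'rV[R]_D) : R := \sum_(k < D) u 0 k * v 0 k.

Definition sigmoid (x : R) : R := 1 / (1 + expR (- x)).

Definition hmodel (D : nat) (u Psi : 'rV[R]_D) : R := sigmoid (dotp u Psi).

Definition grad (D : nat) (f : 'rV[R]_D -> R) (Psi : 'rV[R]_D) : 'rV[R]_D :=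
  \row_(k < D) derive1 (fun t : R => f (Psi + t *: delta_mx 0 k)) 0.

(* An instance: concatenation of d one-hot vectors, block i of size ks i;
   D = \sum_i ks i. *)
Definition is_instance (d : nat) (ks : 'I_d -> nat)
  (x : 'rV[R]_(\sum_(i < d) ks i)) : Prop :=
  exists c : forall i : 'I_d, 'I_(ks i),
    x = \mxrow_(i < d) (delta_mx 0 (c i) : 'rV[R]_(ks i)).

Definition admissible (d : nat) (ks : 'I_d -> nat)
  (u : 'rV[R]_(\sum_(i < d) ks i)) : Prop :=
  exists (n : nat) (c : 'I_n -> R) (x : 'I_n -> 'rV[R]_(\sum_(i < d) ks i)),
    [/\ forall k, 0 <= c k, \sum_(k < n) c k = 1,
        forall k, is_instance (x k) & u = \sum_(k < n) c k *: x k].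

Definition proxy_datum (Y : Type) (d : nat) (ks : 'I_d -> nat)
  (O : seq ('rV[R]_(\sum_(i < d) ks i) * Y)) : Prop :=
  (0 < size O)%N /\ forall p, Stdlib.Lists.List.In p O -> admissible p.1.

Definition proxy_loss (Y : Type) (D : nat) (l : Y -> R -> R)
  (O : seq ('rV[R]_D * Y)) (Psi : 'rV[R]_D) : R :=
  (size O)%:R^-1 * \sum_(p <- O) l p.2 (hmodel p.1 Psi).

Definition sgd (Y : Type) (D M : nat) (l : Y -> R -> R) (alpha : R)
  (S : 'I_M -> seq ('rV[R]_D * Y)) (Psi0 : 'rV[R]_D) (js : seq 'I_M)
  : 'rV[R]_D :=
  foldl (fun Psi j => Psi - alpha *: grad (proxy_loss l (S j)) Psi) Psi0 js.

(* expectation over i.i.d. uniform indices j_0..j_{T-1} in {1..M} *)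
Definition expA (M T : nat) (f : T.-tuple 'I_M -> R) : R :=
  (M ^ T)%:R^-1 * \sum_(js : T.-tuple 'I_M) f js.

Definition replace_at (A : Type) (M : nat) (S : 'I_M -> A) (m : 'I_M) (O' : A)
  : 'I_M -> A := fun j => if j == m then O' else S j.

End Defs.

(* Main.v *)
Require Import Defs.
From HB Require Import structures.
From mathcomp Require Import all_boot all_order all_algebra.
From mathcomp Require Import all_classical all_reals all_analysis.
From mathcomp Require Import ring lra.
Import Order.TTheory GRing.Theory Num.Theory.
Import numFieldNormedType.Exports.
Set Implicit Arguments. Unset Strict Implicit. Unset Printing Implicit Defensive.
Local Open Scope ring_scope.


Section Norm.
Variable R : realType.
Variable n : nat.
Implicit Types u v w : 'rV[R]_n.

Lemma dotpC u v : dotp u v = dotp v u.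
Proof. by rewrite /dotp; apply: eq_bigr => k _; rewrite mulrC. Qed.

Lemma dotp_ge0 u : 0 <= dotp u u.
Proof. by rewrite /dotp; apply: sumr_ge0 => k _; rewrite -expr2 sqr_ge0. Qed.

Lemma norm2E u : norm2 u = Num.sqrt (dotp u u).
Proof. by rewrite /norm2 /dotp; congr Num.sqrt; apply: eq_bigr => k _; rewrite expr2. Qed.

Lemma norm2_ge0 u : 0 <= norm2 u.
Proof. by rewrite norm2E sqrtr_ge0. Qed.

Lemma norm2_sqr u : norm2 u ^+ 2 = dotp u u.
Proof. by rewrite norm2E sqr_sqrtr // dotp_ge0. Qed.

Lemma dotpDr u v w : dotp u (v + w) = dotp u v + dotp u w.
Proof. by rewrite /dotp -big_split; apply: eq_bigr => k _; rewrite mxE mulrDr. Qed.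

Lemma dotpZr c u v : dotp u (c *: v) = c * dotp u v.
Proof. by rewrite /dotp mulr_sumr; apply: eq_bigr => k _; rewrite mxE mulrCA. Qed.

Lemma dotpDl u v w : dotp (v + w) u = dotp v u + dotp w u.
Proof. by rewrite dotpC dotpDr !(dotpC u). Qed.

Lemma dotpZl c u v : dotp (c *: v) u = c * dotp v u.
Proof. by rewrite dotpC dotpZr dotpC. Qed.

Lemma dotpBr u v w : dotp u (v - w) = dotp u v - dotp u w.
Proof. by rewrite -scaleN1r dotpDr dotpZr mulN1r. Qed.

Lemma CS_sqr_dummy : True. Proof. by []. Qed.
Lemma CS_sqr u v : dotp u v ^+ 2 <= dotp u u * dotp v v.
Proof.
have [A0|Apos] := eqVneq (dotp u u) 0.
  have u0 : forall k, u 0 k = 0.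
    move=> k; apply/eqP; rewrite -sqrf_eq0 expr2.
    move/eqP: A0; rewrite /dotp psumr_eq0 => [/allP H|k' _]; last by rewrite -expr2 sqr_ge0.
    by apply: H; rewrite mem_index_enum.
  have -> : dotp u v = 0 by rewrite /dotp big1 // => k _; rewrite u0 mul0r.
  by rewrite A0 mul0r expr0n /=.
have Ap : 0 < dotp u u by rewrite lt_def Apos dotp_ge0.
set t := dotp u v / dotp u u.
have H := dotp_ge0 (t *: u - v).
have dB : forall a b c : 'rV[R]_n, dotp (a - b) c = dotp a c - dotp b c.
  by move=> a b c; rewrite dotpC dotpBr !(dotpC c).
rewrite dB !dotpBr !dotpZl !dotpZr (dotpC v u) in H.
have e : dotp u u * t = dotp u v by rewrite /t mulrCA mulfV // mulr1.
have : 0 <= dotp u u * dotp v v - dotp u v ^+ 2.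
  have : 0 <= dotp u u * (t * (t * dotp u u) - t * dotp u v - (t * dotp u v - dotp v v)).
    by rewrite mulr_ge0 // ltW.
  suff -> : dotp u u * (t * (t * dotp u u) - t * dotp u v - (t * dotp u v - dotp v v))
       = dotp u u * dotp v v - dotp u v ^+ 2 by [].
  rewrite -e; clearbody t; ring.
by rewrite subr_ge0.
Qed.

Lemma CS u v : `|dotp u v| <= norm2 u * norm2 v.
Proof.
rewrite !norm2E -sqrtrM ?dotp_ge0 // -(sqrtr_sqr (dotp u v)) ler_sqrt ?CS_sqr //.
by rewrite mulr_ge0 // dotp_ge0.
Qed.

Lemma norm2D u v : norm2 (u + v) <= norm2 u + norm2 v.
Proof.
rewrite -(ger0_norm (norm2_ge0 (u+v))) -(ger0_norm (addr_ge0 (norm2_ge0 u) (norm2_ge0 v))).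
rewrite -ler_sqr ?nnegrE ?normr_ge0 // !real_normK ?num_real // norm2_sqr.
rewrite dotpDl !dotpDr sqrrD !norm2_sqr (dotpC v u).
have := CS u v; have := ler_norm (dotp u v); lra.
Qed.

Lemma norm2Z c u : norm2 (c *: u) = `|c| * norm2 u.
Proof.
rewrite !norm2E dotpZl dotpZr mulrA -expr2 sqrtrM ?sqr_ge0 // sqrtr_sqr //.
Qed.

Lemma norm2N u : norm2 (- u) = norm2 u.
Proof. by rewrite -scaleN1r norm2Z normrN normr1 mul1r. Qed.

Lemma norm2B u v : norm2 (u - v) <= norm2 u + norm2 v.
Proof. by rewrite -(norm2N v) norm2D. Qed.

Lemma norm2BC u v : norm2 (u - v) = norm2 (v - u).
Proof. by rewrite -norm2N opprB. Qed.

Lemma norm2_0 : norm2 (0 : 'rV[R]_n) = 0.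
Proof. by rewrite -(scale0r (0 : 'rV[R]_n)) norm2Z normr0 mul0r. Qed.

Lemma norm2_gt0 u : u != 0 -> 0 < norm2 u.
Proof.
move=> u0; rewrite lt_def norm2_ge0 andbT norm2E sqrtr_eq0 -ltNge.
rewrite lt_def dotp_ge0 andbT; apply: contra u0 => /eqP A0.
apply/eqP/matrixP => i k; rewrite ord1 mxE.
apply/eqP; rewrite -sqrf_eq0 expr2.
move/eqP: A0; rewrite /dotp psumr_eq0 => [/allP H|k' _]; last by rewrite -expr2 sqr_ge0.
by apply: H; rewrite mem_index_enum.
Qed.

Lemma norm2_sum (A : Type) (O : seq A) (F : A -> 'rV[R]_n) :
  norm2 (\sum_(p <- O) F p) <= \sum_(p <- O) norm2 (F p).
Proof.
elim: O => [|p O IH]; first by rewrite !big_nil norm2_0.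
by rewrite !big_cons; apply: le_trans (norm2D _ _) _; rewrite lerD2l.
Qed.

Lemma ler_sum_In (A : Type) (O : seq A) (F G : A -> R) :
  (forall p, List.In p O -> F p <= G p) ->
  \sum_(p <- O) F p <= \sum_(p <- O) G p.
Proof.
elim: O => [|p O IH] H; first by rewrite !big_nil.
rewrite !big_cons lerD //; first by apply: H; left.
by apply: IH => q Hq; apply: H; right.
Qed.

Lemma sum_const_seq (A : Type) (V : zmodType) (O : seq A) (c : V) :
  \sum_(p <- O) c = c *+ size O.
Proof. by elim: O => [|p O IH]; rewrite ?big_nil ?big_cons ?IH ?mulrS. Qed.

Lemma avg2 (A : Type) (O : seq A) (F G : A -> 'rV[R]_n) (K : R) :
  (0 < size O)%N ->
  (forall p, List.In p O -> norm2 (F p - G p) <= K) ->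
  norm2 ((size O)%:R^-1 *: \sum_(p <- O) F p - (size O)%:R^-1 *: \sum_(p <- O) G p) <= K.
Proof.
move=> n0 H.
rewrite -scalerBr -sumrB norm2Z ger0_norm ?invr_ge0 ?ler0n //.
have n0' : (size O)%:R != 0 :> R by rewrite pnatr_eq0 -lt0n.
rewrite ler_pdivrMl ?ltr0n //.
apply: le_trans (norm2_sum O (fun p => F p - G p)) _.
apply: le_trans (@ler_sum_In _ O (fun p => norm2 (F p - G p)) (fun _ => K) H) _.
by rewrite sum_const_seq mulr_natl.
Qed.

Lemma avg_const (A : Type) (O : seq A) (c : 'rV[R]_n) :
  (0 < size O)%N -> (size O)%:R^-1 *: \sum_(p <- O) c = c.
Proof.
move=> n0; rewrite sum_const_seq -scalerMnr scalerMnl -mulr_natr mulVf ?scale1r //.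
by rewrite pnatr_eq0 -lt0n.
Qed.

End Norm.


Section Sig.
Variable R : realType.

Definition dsig (x : R) := sigmoid x * (1 - sigmoid x).

Lemma sigmoidE (x : R) : sigmoid x = (1 + expR (- x))^-1.
Proof. by rewrite /sigmoid div1r. Qed.

Lemma sig_gt0 (x : R) : 0 < sigmoid x.
Proof. by rewrite sigmoidE invr_gt0 addr_gt0 ?ltr01 ?expR_gt0. Qed.

Lemma sig_lt1 (x : R) : sigmoid x < 1.
Proof.
rewrite sigmoidE invf_lt1 ?addr_gt0 ?ltr01 ?expR_gt0 //.
by rewrite ltrDl expR_gt0.
Qed.

Lemma dsig_ge0 (x : R) : 0 <= dsig x.
Proof. by rewrite /dsig mulr_ge0 // ?subr_ge0 ltW // ?sig_gt0 ?sig_lt1. Qed.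

Lemma dsig_le (x : R) : dsig x <= 1/4.
Proof. rewrite /dsig; have := sqr_ge0 (sigmoid x - 1/2); rewrite expr2; nra. Qed.

Lemma is_derive_sig (x : R) : is_derive x 1 (@sigmoid R) (dsig x).
Proof.
have h1 : is_derive x 1 (fun y : R => - y) (-1).
  exact: (@is_deriveNid _ _ x 1).
have h2 : is_derive x 1 (fun y : R => expR (- y)) (expR (- x) * -1).
  exact: (@is_derive1_comp _ expR (fun y : R => - y)).
have h3 := is_deriveD (is_derive_cst (1 : R) x 1) h2.
have ne : (cst 1 + (fun y : R => expR (- y))) x != 0.
  by rewrite /= gt_eqF // addr_gt0 ?ltr01 ?expR_gt0.
have h4 := is_deriveV ne h3.
have -> : @sigmoid R = (fun y => ((cst 1 + (fun y : R => expR (- y))) y)^-1).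
  by apply/funext => y; rewrite sigmoidE.
apply: is_derive_eq h4 _.
rewrite /dsig !sigmoidE /GRing.scale /=.
have e : (cst 1 + (fun y : R => expR (- y))) x = 1 + expR (- x) by []. rewrite e in ne *. field; exact: ne.
Qed.

Lemma lip_of_deriv (f df : R -> R) (K : R) :
  (forall x : R, is_derive x 1 f (df x)) -> (forall x, `|df x| <= K) ->
  forall a b, `|f a - f b| <= K * `|a - b|.
Proof.
move=> Hd Hb.
have key : forall a b, a <= b -> `|f a - f b| <= K * `|a - b|.
  move=> a b ab.
  have [|c _ e] := @MVT_segment R f df a b ab (fun x _ => Hd x).
    have cf : continuous (f : R -> R).
      by move=> r; apply/differentiable_continuous/derivable1_diffP; case: (Hd r).
    exact: continuous_subspaceT cf.
  rewrite distrC e distrC normrM; apply: ler_wpM2r => //.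
by move=> a b; have [ab|ba] := leP a b; [exact: key|rewrite distrC (distrC a); apply: key; exact: ltW].
Qed.

Lemma sig_lip (a b : R) : `|sigmoid a - sigmoid b| <= 1/4 * `|a - b|.
Proof.
apply: (@lip_of_deriv _ _ (1/4) (@is_derive_sig)) => x.
by rewrite ger0_norm ?dsig_ge0 ?dsig_le.
Qed.

Lemma dsig_lip (a b : R) : `|dsig a - dsig b| <= `|a - b|.
Proof.
have -> : dsig a - dsig b = (sigmoid a - sigmoid b) * (1 - sigmoid a - sigmoid b).
  by rewrite /dsig; ring.
rewrite normrM.
have h1 : `|1 - sigmoid a - sigmoid b| <= 1.
  have := sig_gt0 a; have := sig_gt0 b; have := sig_lt1 a; have := sig_lt1 b.
  rewrite ler_norml; lra.
have h2 := sig_lip a b.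
have h3 : 0 <= `|a - b| by [].
have h4 : 0 <= `|sigmoid a - sigmoid b| by [].
have h5 : 0 <= `|1 - sigmoid a - sigmoid b| by [].
nra.
Qed.

Lemma dsig0 : dsig 0 = 1/4.
Proof.
rewrite /dsig sigmoidE oppr0 expR0.
have -> : (1 + 1 : R) = 2 by [].
by field.
Qed.

Lemma dsig_lt (x : R) : 0 < x -> dsig x < 1/4.
Proof.
move=> x0.
have h1 : expR (- x) < 1 by rewrite expR_lt1 oppr_lt0.
have e0 := expR_gt0 (- x).
have h2 : sigmoid x * (1 + expR (- x)) = 1.
  by rewrite sigmoidE mulVf // gt_eqF // addr_gt0 ?ltr01.
have s0 := sig_gt0 x.
have h3 : 1/2 < sigmoid x by nra.
rewrite /dsig; nra.
Qed.
End Sig.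


Section Grad.
Variable R : realType.
Variable n : nat.
Implicit Types u Psi : 'rV[R]_n.

Definition has_grad (F : 'rV[R]_n -> R) Psi (G : 'rV[R]_n) :=
  forall k : 'I_n, is_derive (0:R) 1 (fun t : R => F (Psi + t *: delta_mx 0 k)) (G 0 k).

Lemma has_gradE F Psi G : has_grad F Psi G -> grad F Psi = G.
Proof.
move=> H; apply/matrixP => i k; rewrite ord1 mxE derive1E.
by case: (H k).
Qed.

Lemma dotp_delta u Psi (t : R) k :
  dotp u (Psi + t *: delta_mx 0 k) = dotp u Psi + t * u 0 k.
Proof.
rewrite dotpDr dotpZr; congr (_ + _ * _).
rewrite /dotp (bigD1 k) //= big1 ?addr0 => [|j jk]; first by rewrite mxE !eqxx /= mulr1.
by rewrite mxE (negbTE jk) andbF mulr0.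
Qed.

Lemma is_derive_affine (g : R -> R) (a b dg : R) :
  is_derive a 1 g dg -> is_derive (0:R) 1 (fun t : R => g (a + t * b)) (dg * b).
Proof.
move=> Hg.
have h1 := is_deriveZ b (is_derive_id (0:R) (1:R)).
have h2 := is_deriveD (is_derive_cst a (0:R) (1:R)) h1.
set f := (_ + _) in h2.
have ft : forall t, f t = a + b * t by move=> t.
have e : f 0 = a by rewrite ft mulr0 addr0.
rewrite -e in Hg.
have h3 := is_derive1_comp Hg h2.
have -> : (fun t : R => g (a + t * b)) = g \o f.
  by apply/funext => t /=; rewrite ft mulrC.
by apply: is_derive_eq h3 _; rewrite add0r [b *: 1]mulr1.
Qed.

Lemma has_grad_dot (g : R -> R) u Psi dg :
  is_derive (dotp u Psi) 1 g dg -> has_grad (fun P => g (dotp u P)) Psi (dg *: u).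
Proof.
move=> Hg k.
have -> : (fun t : R => g (dotp u (Psi + t *: delta_mx 0 k))) =
          (fun t : R => g (dotp u Psi + t * u 0 k)).
  by apply/funext => t; rewrite dotp_delta.
by rewrite mxE; apply: is_derive_affine.
Qed.

Lemma has_grad_sum (A : Type) (O : seq A) (F : A -> 'rV[R]_n -> R) (G : A -> 'rV[R]_n) Psi :
  (forall p, has_grad (F p) Psi (G p)) ->
  has_grad (fun P => \sum_(p <- O) F p P) Psi (\sum_(p <- O) G p).
Proof.
move=> H k; elim: O => [|p O IH].
  have -> : (fun t : R => \sum_(p <- [::]) F p (Psi + t *: delta_mx 0 k)) = cst 0.
    by apply/funext => t; rewrite big_nil.
  by rewrite big_nil mxE; apply: is_derive_cst.
have -> : (fun t : R => \sum_(q <- p :: O) F q (Psi + t *: delta_mx 0 k)) =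
   (fun t : R => F p (Psi + t *: delta_mx 0 k)) + (fun t : R => \sum_(q <- O) F q (Psi + t *: delta_mx 0 k)).
  by apply/funext => t; rewrite big_cons.
by apply: is_derive_eq (is_deriveD (H p k) IH) _; rewrite big_cons mxE.
Qed.

Lemma has_grad_scale (c : R) F Psi G :
  has_grad F Psi G -> has_grad (fun P => c * F P) Psi (c *: G).
Proof.
move=> H k; rewrite mxE.
exact: (@is_deriveZ _ _ _ (fun t : R => F (Psi + t *: delta_mx 0 k)) c 0 1 _ (H k)).
Qed.

Definition dl (Y : Type) (l : Y -> R -> R) (y : Y) u Psi : R :=
  'D_1 (l y) (sigmoid (dotp u Psi)) * dsig (dotp u Psi).

Lemma grad_h u Psi : grad (hmodel u) Psi = dsig (dotp u Psi) *: u.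
Proof. apply: has_gradE; apply: (has_grad_dot (g := @sigmoid R)); exact: is_derive_sig. Qed.

Section L.
Variables (Y : Type) (l : Y -> R -> R).
Hypothesis ld : forall y a, derivable (l y) a 1.

Lemma has_grad_l y u Psi : has_grad (fun P => l y (hmodel u P)) Psi (dl l y u Psi *: u).
Proof.
apply: (has_grad_dot (g := l y \o @sigmoid R)).
apply: is_derive1_comp; last exact: is_derive_sig.
exact: derivableP.
Qed.

Lemma grad_l y u Psi : grad (fun P => l y (hmodel u P)) Psi = dl l y u Psi *: u.
Proof. exact/has_gradE/has_grad_l. Qed.

Lemma grad_L (O : seq ('rV[R]_n * Y)) Psi :
  grad (proxy_loss l O) Psi =
  (size O)%:R^-1 *: \sum_(p <- O) grad (fun P => l p.2 (hmodel p.1 P)) Psi.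
Proof.
apply: has_gradE.
have -> : \sum_(p <- O) grad (fun P => l p.2 (hmodel p.1 P)) Psi = \sum_(p <- O) (dl l p.2 p.1 Psi *: p.1).
  by apply: eq_bigr => p _; rewrite grad_l.
apply: has_grad_scale; apply: has_grad_sum => p; exact: has_grad_l.
Qed.
End L.
End Grad.


Section Adm.
Variable R : realType.
Variables (d : nat) (ks : 'I_d -> nat).
Local Notation D := (\sum_(i < d) ks i)%N.

Lemma inst_entry (x : 'rV[R]_D) : is_instance x -> forall k, 0 <= x 0 k <= 1.
Proof.
move=> [c ->] k; rewrite !mxE.
by rewrite eqxx /=; case: (tagnat.sig2 k == _); rewrite /= ?ler01 ?lexx ?ler01.
Qed.

Lemma inst_sum (x : 'rV[R]_D) : is_instance x -> \sum_k x 0 k = d%:R.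
Proof.
move=> [c ->].
have -> : \sum_k (\mxrow_(i < d) (delta_mx 0 (c i) : 'rV[R]_(ks i))) 0 k =
  ((\mxrow_(i < d) (delta_mx 0 (c i) : 'rV[R]_(ks i))) *m (const_mx 1 : 'cV[R]_D)) 0 0.
  by rewrite !mxE; apply: eq_bigr => k _; rewrite !mxE mulr1.
rewrite -(mxcol_const (p_ := ks)) mul_mxrow_mxcol summxE.
rewrite (eq_bigr (fun _ => 1)) ?sumr_const ?card_ord // => i _.
by rewrite -rowE !mxE.
Qed.

Lemma adm_entry (u : 'rV[R]_D) : admissible u -> forall k, 0 <= u 0 k <= 1.
Proof.
move=> [m [c [x [c0 c1 xi ->]]]] k.
rewrite summxE; apply/andP; split.
  by apply: sumr_ge0 => i _; rewrite mxE mulr_ge0 // (andP (inst_entry (xi i) k)).1.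
rewrite -c1; apply: ler_sum => i _; rewrite mxE.
have /andP[h1 h2] := inst_entry (xi i) k.
by rewrite ler_piMr.
Qed.

Lemma adm_sum (u : 'rV[R]_D) : admissible u -> \sum_k u 0 k = d%:R.
Proof.
move=> [m [c [x [c0 c1 xi ->]]]].
under eq_bigr do rewrite summxE.
rewrite exchange_big /=.
under eq_bigr do under eq_bigr do rewrite mxE.
under eq_bigr do rewrite -mulr_sumr inst_sum //.
by rewrite -mulr_suml c1 mul1r.
Qed.

Lemma adm_dot (u : 'rV[R]_D) : admissible u -> dotp u u <= d%:R.
Proof.
move=> ua; rewrite -(adm_sum ua) /dotp; apply: ler_sum => k _.
have /andP[h1 h2] := adm_entry ua k.
by rewrite ler_piMr.
Qed.

Lemma adm_norm (u : 'rV[R]_D) : admissible u -> norm2 u <= Num.sqrt d%:R.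
Proof. by move=> ua; rewrite norm2E ler_sqrt ?ler0n ?adm_dot. Qed.

Lemma adm_nz (u : 'rV[R]_D) : admissible u -> (0 < d)%N -> u != 0.
Proof.
move=> ua d0; apply/eqP => u0.
have := adm_sum ua; rewrite u0 big1 => [/esym/eqP|k _]; last by rewrite mxE.
by rewrite pnatr_eq0 => /eqP d00; rewrite d00 in d0.
Qed.
End Adm.


Section Exp.
Variable R : realType.
Variable M : nat.

Lemma big_tuple_cons T (F : T.+1.-tuple 'I_M -> R) :
  \sum_(t : T.+1.-tuple 'I_M) F t = \sum_(j : 'I_M) \sum_(js : T.-tuple 'I_M) F [tuple of j :: js].
Proof.
rewrite pair_big /=.
rewrite (reindex (fun p : 'I_M * T.-tuple 'I_M => [tuple of p.1 :: p.2])) //.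
exists (fun t => (thead t, [tuple of behead t])) => [[j js] _|t _] /=.
  by congr pair; apply: val_inj.
by rewrite -tuple_eta.
Qed.

Lemma expA_cons T (f : T.+1.-tuple 'I_M -> R) :
  expA f = M%:R^-1 * \sum_(j : 'I_M) expA (fun js : T.-tuple 'I_M => f [tuple of j :: js]).
Proof.
rewrite /expA big_tuple_cons expnS natrM invfM -mulrA; congr (_ * _).
by rewrite mulr_sumr.
Qed.

Lemma expA_0 (f : 0.-tuple 'I_M -> R) : expA f = f [tuple].
Proof.
rewrite /expA expn0 invr1 mul1r (eq_bigr (fun _ => f [tuple])) => [|t _]; last by rewrite tuple0.
by rewrite sumr_const card_tuple expn0.
Qed.

Lemma expA_le T (f g : T.-tuple 'I_M -> R) :
  (forall js, f js <= g js) -> expA f <= expA g.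
Proof.
move=> H; rewrite /expA ler_wpM2l ?invr_ge0 ?ler0n //.
by apply: ler_sum => js _; apply: H.
Qed.

Lemma expAZ T (c : R) (f : T.-tuple 'I_M -> R) :
  expA (fun js => c * f js) = c * expA f.
Proof. by rewrite /expA -mulr_sumr mulrCA. Qed.

Lemma expA_norm T (f : T.-tuple 'I_M -> R) :
  `|expA f| <= expA (fun js => `|f js|).
Proof.
rewrite /expA normrM ger0_norm ?invr_ge0 ?ler0n // ler_wpM2l ?invr_ge0 ?ler0n //.
exact: ler_norm_sum.
Qed.

Lemma expAB T (f g : T.-tuple 'I_M -> R) :
  expA (fun js => f js - g js) = expA f - expA g.
Proof. by rewrite /expA sumrB mulrBr. Qed.
End Exp.


Section Main.
Variable R : realType.
Variables (Y : Type) (d : nat) (ks : 'I_d -> nat).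
Local Notation D := (\sum_(i < d) ks i)%N.
Local Notation V := 'rV[R]_D.
Variables (l : Y -> R -> R) (beta beta' alpha : R).
Hypothesis ld : forall y a, derivable (l y) a 1.
Hypothesis A1 : forall y a b, `|l y a - l y b| <= beta * `|a - b|.
Hypothesis A2 : forall (y y' : Y) (u u' Psi Psi' : V),
     admissible u -> admissible u' ->
     norm2 (grad (fun P => l y (hmodel u P)) Psi
            - grad (fun P => l y' (hmodel u' P)) Psi')
     <= beta' * norm2 (grad (hmodel u) Psi - grad (hmodel u') Psi').

Lemma gh_diff (u : V) Psi Psi' : admissible u ->
  norm2 (grad (hmodel u) Psi - grad (hmodel u) Psi') <= d%:R * norm2 (Psi - Psi').
Proof.
move=> ua; rewrite !grad_h -scalerBl norm2Z.
apply: le_trans (ler_wpM2r (norm2_ge0 u) (dsig_lip _ _)) _.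
rewrite -dotpBr.
apply: le_trans (ler_wpM2r (norm2_ge0 u) (CS _ _)) _.
rewrite mulrAC -expr2 norm2_sqr ler_wpM2r ?norm2_ge0 //.
exact: adm_dot.
Qed.

Lemma gh_bound (u : V) Psi : admissible u ->
  norm2 (grad (hmodel u) Psi) <= 1/4 * Num.sqrt d%:R.
Proof.
move=> ua; rewrite grad_h norm2Z ger0_norm ?dsig_ge0 //.
apply: ler_pM => //; [exact: dsig_ge0|exact: norm2_ge0|exact: dsig_le|exact: adm_norm].
Qed.

Lemma gh_diff2 (u u' : V) Psi Psi' : admissible u -> admissible u' ->
  norm2 (grad (hmodel u) Psi - grad (hmodel u') Psi') <= 1/2 * Num.sqrt d%:R.
Proof.
move=> ua ua'; apply: le_trans (norm2B _ _) _.
apply: le_trans (lerD (gh_bound Psi ua) (gh_bound Psi' ua')) _.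
rewrite -mulrDl ler_wpM2r ?sqrtr_ge0 //.
have -> : (1 / 4 + 1 / 4 : R) = 1 / 2 by field.
by [].
Qed.

Lemma beta'_ge0 (y : Y) (u : V) : admissible u -> (0 < d)%N -> 0 <= beta'.
Proof.
move=> ua d0.
have H := A2 y y 0 u ua ua.
rewrite !grad_h -scalerBl norm2Z in H.
have un := norm2_gt0 (adm_nz ua d0).
have dpos : 0 < dotp u u by rewrite -norm2_sqr exprn_gt0.
have h1 := dsig_lt dpos.
have e0 : dotp u 0 = 0 by rewrite /dotp big1 // => k _; rewrite mxE mulr0.
rewrite e0 dsig0 in H.
have h2 : 0 < `|1 / 4 - dsig (dotp u u)| * norm2 u.
  by rewrite mulr_gt0 // normr_gt0 subr_eq0 gt_eqF.
have h3 := norm2_ge0 (grad (fun P => l y (hmodel u P)) 0 - grad (fun P => l y (hmodel u P)) u).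
have : 0 <= beta' * (`|1 / 4 - dsig (dotp u u)| * norm2 u) by apply: le_trans H.
by rewrite pmulr_lge0.
Qed.

Hypothesis b'0 : 0 <= beta'.

Local Notation gL O Psi := (grad (proxy_loss l O) Psi).
Local Notation gl p Psi := (grad (fun P => l p.2 (hmodel p.1 P)) Psi).

Lemma step_same (O : seq (V * Y)) Psi Psi' : proxy_datum O ->
  norm2 (gL O Psi - gL O Psi') <= beta' * d%:R * norm2 (Psi - Psi').
Proof.
move=> [n0 Oa]; rewrite !grad_L //.
apply: avg2 => // p pO.
apply: le_trans (A2 p.2 p.2 Psi Psi' (Oa p pO) (Oa p pO)) _.
by rewrite -mulrA ler_wpM2l // gh_diff //; apply: Oa.
Qed.

Lemma step_diff (O O' : seq (V * Y)) Psi Psi' : proxy_datum O -> proxy_datum O' ->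
  norm2 (gL O Psi - gL O' Psi') <= beta' * Num.sqrt d%:R.
Proof.
move=> [n0 Oa] [n0q Oaq]; rewrite !grad_L //.
case: O' n0q Oaq => [//|q0 O'] n0q Oaq.
set c := gl q0 Psi'.
have q0a : admissible q0.1 by apply: Oaq; left.
have K : forall (O1 : seq (V * Y)) Psi1, (0 < size O1)%N ->
    (forall p, List.In p O1 -> admissible p.1) ->
    norm2 ((size O1)%:R^-1 *: \sum_(p <- O1) gl p Psi1 - c) <= beta' * (1/2 * Num.sqrt d%:R).
  move=> O1 Psi1 n1 H1.
  rewrite -[X in _ - X](avg_const c n1); apply: avg2 => // p pO.
  apply: le_trans (A2 p.2 q0.2 Psi1 Psi' (H1 p pO) q0a) _.
  by rewrite ler_wpM2l // gh_diff2 //; apply: H1.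
set A := _ *: \sum_(p <- O) _.
set B := _ *: \sum_(p <- q0 :: O') _.
have -> : A - B = (A - c) - (B - c) by rewrite opprB addrA subrK.
apply: le_trans (norm2B _ _) _.
apply: le_trans (lerD (K O Psi n0 Oa) (K (q0 :: O') Psi' n0q Oaq)) _.
by rewrite -mulrDr -mulrDl -splitr mul1r.
Qed.

End Main.


Lemma ar1 (R : realType) (x y al b : R) : 0 <= x -> 0 <= b -> 0 <= al <= 1 -> 0 <= y ->
  y <= b * x -> x + al * y <= (1 + b) * x.
Proof. move=> x0 b0 /andP[a0 a1] y0 yb; nra. Qed.

Lemma ar2 (R : realType) (x y al b c : R) : 0 <= x -> 0 <= b -> 0 <= al <= 1 -> 0 <= y ->
  y <= c -> x + al * y <= (1 + b) * x + 2 * c.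
Proof. move=> x0 b0 /andP[a0 a1] y0 yb; nra. Qed.

Lemma subrACB (W : zmodType) (x y u v : W) : (x - u) - (y - v) = (x - y) - (u - v).
Proof. by rewrite !opprB addrACA [RHS]addrACA [- u + - y]addrC. Qed.

Section Rec.
Variable R : realType.
Variables (Y : Type) (d : nat) (ks : 'I_d -> nat).
Local Notation D := (\sum_(i < d) ks i)%N.
Local Notation V := 'rV[R]_D.
Variables (l : Y -> R -> R) (beta beta' alpha : R) (M : nat).
Variables (S : 'I_M -> seq (V * Y)) (m : 'I_M) (Om' : seq (V * Y)).
Hypothesis ld : forall y a, derivable (l y) a 1.
Hypothesis A2 : forall (y y' : Y) (u u' Psi Psi' : V),
     admissible u -> admissible u' ->
     norm2 (grad (fun P => l y (hmodel u P)) Psi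
            - grad (fun P => l y' (hmodel u' P)) Psi')
     <= beta' * norm2 (grad (hmodel u) Psi - grad (hmodel u') Psi').
Hypothesis b'0 : 0 <= beta'.
Hypothesis al : 0 < alpha <= 1.
Hypothesis HS : forall j, proxy_datum (S j).
Hypothesis HO : proxy_datum Om'.
Hypothesis M0 : (0 < M)%N.

Local Notation Sm := (replace_at S m Om').
Local Notation gL O Psi := (grad (proxy_loss l O) Psi).
Local Notation a := (1 + beta' * d%:R).
Local Notation c2 := (2 * (beta' * Num.sqrt d%:R)).

Lemma step_bound (j : 'I_M) (Psi Psi' : V) :
  norm2 ((Psi - alpha *: gL (S j) Psi) - (Psi' - alpha *: gL (Sm j) Psi'))
  <= a * norm2 (Psi - Psi') + (j == m)%:R * c2.
Proof.
have -> : (Psi - alpha *: gL (S j) Psi) - (Psi' - alpha *: gL (Sm j) Psi')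
   = (Psi - Psi') - alpha *: (gL (S j) Psi - gL (Sm j) Psi').
  by rewrite subrACB scalerBr.
apply: le_trans (norm2B _ _) _.
rewrite norm2Z ger0_norm; last by case/andP: al => /ltW.
have al' : 0 <= alpha <= 1 by case/andP: al => /ltW -> ->.
have bd : 0 <= beta' * d%:R by rewrite mulr_ge0.
rewrite /replace_at; case: eqP => [->|jm].
  rewrite mul1r; apply: ar2 => //; rewrite ?norm2_ge0 //.
  exact: step_diff.
rewrite mul0r addr0; apply: ar1 => //; rewrite ?norm2_ge0 //.
exact: step_same.
Qed.

Definition bb := 2 * beta' * Num.sqrt d%:R / M%:R.

Lemma rec T : forall Psi Psi' : V,
  expA (fun js : T.-tuple 'I_M => norm2 (sgd l alpha S Psi js - sgd l alpha Sm Psi' js))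
  <= a ^+ T * norm2 (Psi - Psi') + bb * \sum_(t < T) a ^+ t.
Proof.
have a0 : 0 <= a by rewrite addr_ge0 // mulr_ge0.
have Mn0 : M%:R != 0 :> R by rewrite pnatr_eq0 -lt0n.
elim: T => [|T IH] Psi Psi'.
  by rewrite expA_0 /= expr0 mul1r big_ord0 mulr0 addr0.
rewrite expA_cons.
set dl := norm2 (Psi - Psi').
set Sg := \sum_(t < T) a ^+ t.
set G := fun j : 'I_M => a ^+ T * (a * dl + (j == m)%:R * c2) + bb * Sg.
apply: (@le_trans _ _ (M%:R^-1 * \sum_(j : 'I_M) G j)).
  rewrite ler_wpM2l ?invr_ge0 ?ler0n //; apply: ler_sum => j _.
  set P1 := Psi - alpha *: gL (S j) Psi.
  set P1' := Psi' - alpha *: gL (Sm j) Psi'.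
  have -> : expA (fun js : T.-tuple 'I_M => norm2 (sgd l alpha S Psi [tuple of j :: js]
              - sgd l alpha Sm Psi' [tuple of j :: js]))
          = expA (fun js : T.-tuple 'I_M => norm2 (sgd l alpha S P1 js - sgd l alpha Sm P1' js)) by [].
  apply: le_trans (IH P1 P1') _.
  rewrite /G lerD2r.
  have hs := step_bound j Psi Psi'.
  apply: ler_wpM2l; first by rewrite exprn_ge0.
  by rewrite /P1 /P1' /dl; exact: hs.
have sumG : \sum_j G j = M%:R * (a ^+ T * (a * dl) + bb * Sg) + a ^+ T * c2.
  rewrite /G; under eq_bigr do rewrite mulrDr.
  rewrite !big_split /= !sumr_const card_ord.
  rewrite (bigD1 m) //= eqxx mul1r big1 ?addr0 => [|j /negbTE ->]; last by rewrite mul0r mulr0.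
  ring.
rewrite sumG big_ord_recr /= -/Sg exprS /bb.
rewrite le_eqVlt; apply/orP; left; apply/eqP; rewrite /dl /Sg; clearbody dl Sg.
move: (Num.sqrt d%:R) (a ^+ T) => sd aT.

by field.
Qed.
End Rec.


Lemma loss_lip (R : realType) (Y : Type) (d : nat) (ks : 'I_d -> nat)
  (l : Y -> R -> R) (beta : R) (O : seq ('rV[R]_(\sum_(i < d) ks i) * Y))
  (X X' : 'rV[R]_(\sum_(i < d) ks i)) :
  0 <= beta ->
  (forall y a b, `|l y a - l y b| <= beta * `|a - b|) ->
  proxy_datum O ->
  `|proxy_loss l O X - proxy_loss l O X'| <= beta * Num.sqrt d%:R * norm2 (X - X').
Proof.
move=> b0 A1 [nO Oa].
rewrite /proxy_loss -mulrBr -sumrB normrM ger0_norm ?invr_ge0 ?ler0n //.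
have n0 : (size O)%:R != 0 :> R by rewrite pnatr_eq0 -lt0n.
rewrite ler_pdivrMl ?ltr0n //.
apply: le_trans (ler_norm_sum _ _ _) _.
apply: le_trans (@ler_sum_In _ _ O _ (fun _ => beta * Num.sqrt d%:R * norm2 (X - X')) _) _.
  move=> p pO.
  apply: le_trans (A1 _ _ _) _.
  rewrite -mulrA ler_wpM2l //.
  apply: le_trans (sig_lip _ _) _.
  rewrite -dotpBr.
  have h1 := CS p.1 (X - X').
  have h2 := adm_norm (Oa p pO).
  have h3 : norm2 p.1 * norm2 (X - X') <= Num.sqrt d%:R * norm2 (X - X').
    by rewrite ler_wpM2r ?norm2_ge0.
  have h4 := normr_ge0 (dotp p.1 (X - X')).
  move: h1 h3 h4; move: (`|dotp p.1 (X - X')|) (norm2 p.1 * norm2 (X - X')) (Num.sqrt d%:R * norm2 (X - X')).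
  move=> x y z; lra.
by rewrite sum_const_seq mulr_natl.
Qed.

Unset Implicit Arguments.
Theorem mainTheorem3 (R : realType) (Y : Type) (d : nat) (ks : 'I_d -> nat)
  (l : Y -> R -> R) (beta beta' alpha : R) (M T : nat)
  (S : 'I_M -> seq ('rV[R]_(\sum_(i < d) ks i) * Y)) (m : 'I_M)
  (Om' : seq ('rV[R]_(\sum_(i < d) ks i) * Y))
  (Psi0 : 'rV[R]_(\sum_(i < d) ks i)) :
  (forall y a, derivable (l y) a 1) ->
  (forall y a b, `|l y a - l y b| <= beta * `|a - b|) ->
  (forall (y y' : Y) (u u' Psi Psi' : 'rV[R]_(\sum_(i < d) ks i)),
     admissible u -> admissible u' ->
     norm2 (grad (fun P => l y (hmodel u P)) Psi
            - grad (fun P => l y' (hmodel u' P)) Psi')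
     <= beta' * norm2 (grad (hmodel u) Psi - grad (hmodel u') Psi')) ->
  0 < alpha <= 1 ->
  (forall j, proxy_datum (S j)) ->
  proxy_datum Om' ->
  let Sm := replace_at S m Om' in
  let bound := \sum_(t < T) (1 + beta' * d%:R) ^+ t in
  expA (fun js : T.-tuple 'I_M =>
          norm2 (sgd l alpha S Psi0 js - sgd l alpha Sm Psi0 js))
    <= 2 * beta' * Num.sqrt d%:R / M%:R * bound
  /\
  (forall O : seq ('rV[R]_(\sum_(i < d) ks i) * Y), proxy_datum O ->
     `|expA (fun js : T.-tuple 'I_M =>
          proxy_loss l O (sgd l alpha S Psi0 js) - proxy_loss l O (sgd l alpha Sm Psi0 js))|
     <= 2 * beta * beta' * d%:R / M%:R * bound).
Proof.
move=> ld A1 A2 al HS HO Sm bound.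
have M0 : (0 < M)%N by exact: (leq_ltn_trans (leq0n m) (ltn_ord m)).
have expA0 : forall (f : T.-tuple 'I_M -> R), (forall js, f js = 0) -> expA f = 0.
  by move=> f f0; rewrite /expA big1 ?mulr0 // => js _; rewrite f0.
case: (posnP d) => [d0|dpos].
  subst d.
  have veq : forall v w : 'rV[R]_(\sum_(i < 0) ks i), v = w.
    move=> v w; apply/matrixP => i k.
    by exfalso; move: (ltn_ord k); move: (nat_of_ord k) => kk; rewrite big_ord0.
  rewrite sqrtr0 !mulr0 !mul0r; split.
    rewrite expA0 // => js.
    by rewrite (veq (sgd l alpha S Psi0 js) (sgd l alpha Sm Psi0 js)) subrr norm2_0.
  move=> O _; rewrite expA0 ?normr0 // => js.
  by rewrite (veq (sgd l alpha S Psi0 js) (sgd l alpha Sm Psi0 js)) subrr.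
have [nS Sa] := HS m.
case ES: (S m) nS Sa => [//|p0 O0] _ Sa.
have p0a : admissible p0.1 by apply: Sa; left.
have b'0 := beta'_ge0 A2 p0.2 p0a dpos.
have R0 := rec m ld A2 b'0 al HS HO M0 T Psi0 Psi0.
rewrite subrr norm2_0 mulr0 add0r /bb in R0.
split; first exact: R0.
move=> O [nO Oa].
case EO: O nO Oa => [//|q0 O1] nO Oa.
have b0 : 0 <= beta.
  have := A1 q0.2 1 0; rewrite subr0 normr1 mulr1; exact: le_trans.
rewrite -EO.
apply: le_trans (expA_norm _) _.
apply: le_trans (@expA_le _ _ _ _ (fun js => beta * Num.sqrt d%:R *
   norm2 (sgd l alpha S Psi0 js - sgd l alpha Sm Psi0 js)) _) _.
  move=> js; apply: loss_lip => //; rewrite EO; split => //.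
rewrite expAZ.
apply: le_trans (ler_wpM2l _ R0) _; first by rewrite mulr_ge0 ?sqrtr_ge0.
have sq : Num.sqrt d%:R * Num.sqrt d%:R = d%:R :> R.
  by rewrite -expr2 sqr_sqrtr ?ler0n.
rewrite le_eqVlt; apply/orP; left; apply/eqP.
move: sq R0; set sd := Num.sqrt d%:R => sq R0.
have -> : beta * sd * (2 * beta' * sd / M%:R * \sum_(t < T) (1 + beta' * d%:R) ^+ t)
   = 2 * beta * beta' * (sd * sd) / M%:R * bound by rewrite /bound; ring.
by rewrite sq.
Qed.
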